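(* Let $(\mathcal X,d)$ be a metric space and $M>0$ an integer, and suppose $\mathcal X$ contains two $M$-configurations $P$ and $Q$ with $d(u,v)\ge 4$ for all $u\in P$, $v\in Q$. Let $b\le M/2$ be a nonnegative integer. Then there is no deterministic incremental algorithm with $b$ bits of storage that, for every finite set $D\subset\mathcal X$ which has a unique nice $3$-clustering $\mathcal C$ and for every ordering of $D$, outputs $\mathcal C$ after processing $D$ in that order.
   Context: A clustering of a set $D$ is a set of nonempty, pairwise disjoint subsets (clusters) whose union is $D$; a $k$-clustering has exactly $k$ clusters. Write $x\sim_{\mathcal C}y$ if $x,y$ are in the same cluster of $\mathcal C$ and $x\not\sim_{\mathcal C}y$ otherwise. A clustering $\mathcal C$ of $(D,d)$ is nice if for all $x,y,z\in D$: $d(y,x)<d(z,x)$ whenever $x\sim_{\mathcal C}y$ and $x\not\sim_{\mathcal C}z$. For an integer $M>0$, an $M$-configuration in a metric space $(\mathcal X,d)$ is a collection of $2M+1$ points $x_o,x_1,\ldots,x_M,x_1',\ldots,x_M'\in\mathcal X$ such that: (i) all pairwise distances among them lie in $[1,2]$; (ii) $d(x_o,x_i),d(x_o,x_i')\in(3/2,2]$ for all $i\ge1$; (iii) $d(x_i,x_j),d(x_i',x_j'),d(x_i,x_j')\in[1,3/2]$ for all $i\ne j$, $i,j\ge 1$; (iv) $d(x_i,x_i')>d(x_o,x_i)$ for all $i\ge1$. A deterministic incremental algorithm with $b$ bits of storage on $\mathcal X$ consists of an initial state $\sigma_0\in\{0,1\}^b$, a transition map $\tau:\{0,1\}^b\times\mathcal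 X\to\{0,1\}^b$, and an output map $\omega$ assigning to each state a partition of $\mathcal X$. On an input sequence $x_1,\ldots,x_n$ it computes states $\sigma_m=\tau(\sigma_{m-1},x_m)$ for $m=1,\ldots,n$, and its output is $\omega(\sigma_n)$; it outputs a clustering $\mathcal C$ of $D=\{x_1,\ldots,x_n\}$ if the restriction of $\omega(\sigma_n)$ to $D$ equals $\mathcal C$. *)

(* Defs.v *)
From Stdlib Require Import Reals List Vector.
Open Scope R_scope.
Set Implicit Arguments.

Definition is_metric (X : Type) (d : X -> X -> R) : Prop :=
  (forall x y, 0 <= d x y) /\
  (forall x y, d x y = 0 <-> x = y) /\
  (forall x y, d x y = d y x) /\
  (forall x y z, d x z <= d x y + d y z).

(* Subsets of X are predicates; families of subsets are predicates on predicates.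
   Equality of subsets / families is extensional. *)
Definition subset_eq (X : Type) (A B : X -> Prop) : Prop := forall x, A x <-> B x.

Definition fam_eq (X : Type) (C C' : (X -> Prop) -> Prop) : Prop :=
  (forall A, C A -> exists B, C' B /\ subset_eq A B) /\
  (forall B, C' B -> exists A, C A /\ subset_eq A B).

Definition is_clustering (X : Type) (D : X -> Prop) (C : (X -> Prop) -> Prop) : Prop :=
  (forall A, C A -> (exists x, A x) /\ (forall x, A x -> D x)) /\
  (forall A B, C A -> C B -> (exists x, A x /\ B x) -> subset_eq A B) /\
  (forall x, D x -> exists A, C A /\ A x).

Definition has_k_clusters (X : Type) (C : (X -> Prop) -> Prop) (k : nat) : Prop :=
  exists l : list (X -> Prop),
    List.length l = k /\
    (forall A, List.In A l -> C A) /\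
    (forall A, C A -> exists B, List.In B l /\ subset_eq A B) /\
    ForallOrdPairs (fun A B => ~ subset_eq A B) l.

Definition k_clustering (X : Type) (D : X -> Prop) (k : nat) (C : (X -> Prop) -> Prop) : Prop :=
  is_clustering D C /\ has_k_clusters C k.

Definition same_cluster (X : Type) (C : (X -> Prop) -> Prop) (x y : X) : Prop :=
  exists A, C A /\ A x /\ A y.

Definition nice (X : Type) (d : X -> X -> R) (D : X -> Prop) (C : (X -> Prop) -> Prop) : Prop :=
  forall x y z, D x -> D y -> D z ->
    same_cluster C x y -> ~ same_cluster C x z -> d y x < d z x.

Definition unique_nice_k_clustering (X : Type) (d : X -> X -> R) (D : X -> Prop) (k : nat)
    (C : (X -> Prop) -> Prop) : Prop :=
  k_clustering D k C /\ nice d D C /\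
  (forall C', k_clustering D k C' -> nice d D C' -> fam_eq C' C).

Definition restrict (X : Type) (P : (X -> Prop) -> Prop) (D : X -> Prop) : (X -> Prop) -> Prop :=
  fun A => exists B, P B /\ (exists x, B x /\ D x) /\ (forall x, A x <-> (B x /\ D x)).

(* M-configuration: points xo, xs 1..M, xs' 1..M. *)
Record config (X : Type) := mkConfig { c_o : X; c_x : nat -> X; c_x' : nat -> X }.

Definition in12 (r : R) : Prop := 1 <= r <= 2.

Definition is_M_config (X : Type) (d : X -> X -> R) (M : nat) (P : config X) : Prop :=
  let xo := c_o P in let x := c_x P in let x' := c_x' P in
  (forall i, (1 <= i <= M)%nat ->
     in12 (d xo (x i)) /\ in12 (d xo (x' i)) /\ in12 (d (x i) (x' i))) /\
  (forall i j, (1 <= i <= M)%nat -> (1 <= j <= M)%nat -> i <> j ->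
     in12 (d (x i) (x j)) /\ in12 (d (x' i) (x' j)) /\ in12 (d (x i) (x' j))) /\
  (forall i, (1 <= i <= M)%nat ->
     3/2 < d xo (x i) <= 2 /\ 3/2 < d xo (x' i) <= 2) /\
  (forall i j, (1 <= i <= M)%nat -> (1 <= j <= M)%nat -> i <> j ->
     1 <= d (x i) (x j) <= 3/2 /\ 1 <= d (x' i) (x' j) <= 3/2 /\ 1 <= d (x i) (x' j) <= 3/2) /\
  (forall i, (1 <= i <= M)%nat -> d (x i) (x' i) > d xo (x i)).

Definition in_config (X : Type) (M : nat) (P : config X) (u : X) : Prop :=
  u = c_o P \/ exists i, (1 <= i <= M)%nat /\ (u = c_x P i \/ u = c_x' P i).

Definition run (S X : Type) (tau : S -> X -> S) (s0 : S) (l : list X) : S :=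
  List.fold_left tau l s0.

(* Main.v *)
Require Import Defs.
From Stdlib Require Import Reals List Vector.
From Stdlib Require Import Lra Lia Classical FinFun.
Open Scope R_scope.
Import List ListNotations.
Set Implicit Arguments.

Section Gen.
Variable X : Type.
Variable D : X -> Prop.
Implicit Types (C : (X -> Prop) -> Prop) (x y z a b c e u v : X) (A B : X -> Prop).

Lemma sc_sym C x y : same_cluster C x y -> same_cluster C y x.
Proof. intros [A [HA [H1 H2]]]; exists A; auto. Qed.

Lemma sc_trans C x y z : is_clustering D C ->
  same_cluster C x y -> same_cluster C y z -> same_cluster C x z.
Proof.
  intros [_ [Hd _]] [A [HA [H1 H2]]] [B [HB [H3 H4]]].
  exists A; repeat split; auto.
  apply (Hd A B HA HB (ex_intro _ y (conj H2 H3))); auto.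
Qed.

Lemma sc_refl C x : is_clustering D C -> D x -> same_cluster C x x.
Proof. intros [_ [_ Hc]] Hx. destruct (Hc x Hx) as [A [HA HAx]]. exists A; auto. Qed.

Lemma k3_blocks C : k_clustering D 3 C ->
  exists B1 B2 B3, C B1 /\ C B2 /\ C B3 /\
   (forall x, D x -> B1 x \/ B2 x \/ B3 x) /\
   (exists r1 r2 r3, D r1 /\ D r2 /\ D r3 /\ B1 r1 /\ B2 r2 /\ B3 r3) /\
   ~ subset_eq B1 B2 /\ ~ subset_eq B1 B3 /\ ~ subset_eq B2 B3.
Proof.
  intros [Hcl [l [Hlen [Hin [Hall Hfop]]]]].
  destruct l as [|B1 [|B2 [|B3 [|B4 l]]]]; simpl in Hlen; try discriminate.
  exists B1, B2, B3.
  assert (C1 : C B1) by (apply Hin; simpl; auto).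
  assert (C2 : C B2) by (apply Hin; simpl; auto).
  assert (C3' : C B3) by (apply Hin; simpl; auto).
  destruct Hcl as [Hne [Hd Hc]].
  repeat split; auto.
  - intros x Hx. destruct (Hc x Hx) as [A [HA HAx]].
    destruct (Hall A HA) as [B [HB Heq]]. simpl in HB.
    destruct HB as [ <- | [ <- | [ <- | [] ] ] ]; apply Heq in HAx; auto.
  - destruct (Hne B1 C1) as [[r1 H1] HD1].
    destruct (Hne B2 C2) as [[r2 H2] HD2].
    destruct (Hne B3 C3') as [[r3 H3] HD3].
    exists r1, r2, r3; repeat split; auto.
  - inversion Hfop; subst. inversion H1; subst. auto.
  - inversion Hfop; subst. inversion H1; subst. inversion H4; subst; auto.
  - inversion Hfop; subst. inversion H2; subst. inversion H3; subst; auto.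
Qed.

Lemma in_blk_same C B x y : C B -> B x -> B y -> same_cluster C x y.
Proof. intros; exists B; auto. Qed.

Lemma four C a b c e : k_clustering D 3 C -> D a -> D b -> D c -> D e ->
  same_cluster C a b \/ same_cluster C a c \/ same_cluster C a e \/
  same_cluster C b c \/ same_cluster C b e \/ same_cluster C c e.
Proof.
  intros Hk Ha Hb Hc He.
  destruct (k3_blocks Hk) as [B1 [B2 [B3 [C1 [C2 [C3' [Hcov _]]]]]]].
  destruct (Hcov a Ha) as [Ha'|[Ha'|Ha']];
  destruct (Hcov b Hb) as [Hb'|[Hb'|Hb']];
  destruct (Hcov c Hc) as [Hc'|[Hc'|Hc']];
  destruct (Hcov e He) as [He'|[He'|He']];
  first [ left; eapply in_blk_same; [ | eassumption | eassumption ]; assumption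
        | right; left; eapply in_blk_same; [ | eassumption | eassumption ]; assumption
        | right; right; left; eapply in_blk_same; [ | eassumption | eassumption ]; assumption
        | right; right; right; left; eapply in_blk_same; [ | eassumption | eassumption ]; assumption
        | right; right; right; right; left; eapply in_blk_same; [ | eassumption | eassumption ]; assumption
        | right; right; right; right; right; eapply in_blk_same; [ | eassumption | eassumption ]; assumption ].
Qed.

Lemma reps C : k_clustering D 3 C ->
  exists r1 r2 r3, D r1 /\ D r2 /\ D r3 /\ ~ same_cluster C r1 r2 /\
    ~ same_cluster C r1 r3 /\ ~ same_cluster C r2 r3.
Proof.
  intros Hk. pose proof Hk as [Hcl _].
  destruct (k3_blocks Hk) as (B1 & B2 & B3 & C1 & C2 & C3' & Hcov & (r1 & r2 & r3 & D1 & D2 & D3 & H1 & H2 & H3) & N12 & N13 & N23).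
  destruct Hcl as [Hne [Hd Hc]].
  exists r1, r2, r3; repeat split; auto.
  - intros [A [HA [Ha Hb]]]. apply N12.
    pose proof (Hd A B1 HA C1 (ex_intro _ r1 (conj Ha H1))) as E1.
    pose proof (Hd A B2 HA C2 (ex_intro _ r2 (conj Hb H2))) as E2.
    intro z; specialize (E1 z); specialize (E2 z); tauto.
  - intros [A [HA [Ha Hb]]]. apply N13.
    pose proof (Hd A B1 HA C1 (ex_intro _ r1 (conj Ha H1))) as E1.
    pose proof (Hd A B3 HA C3' (ex_intro _ r3 (conj Hb H3))) as E2.
    intro z; specialize (E1 z); specialize (E2 z); tauto.
  - intros [A [HA [Ha Hb]]]. apply N23.
    pose proof (Hd A B2 HA C2 (ex_intro _ r2 (conj Ha H2))) as E1.
    pose proof (Hd A B3 HA C3' (ex_intro _ r3 (conj Hb H3))) as E2.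
    intro z; specialize (E1 z); specialize (E2 z); tauto.
Qed.

Lemma twoclass C u v : k_clustering D 3 C ->
  (forall x, D x -> same_cluster C x u \/ same_cluster C x v) -> False.
Proof.
  intros Hk H. pose proof Hk as [Hcl _].
  destruct (reps Hk) as [r1 [r2 [r3 [D1 [D2 [D3 [N12 [N13 N23]]]]]]]].
  destruct (H r1 D1) as [A1|A1]; destruct (H r2 D2) as [A2|A2];
  destruct (H r3 D3) as [A3|A3];
  first [ apply N12; eapply sc_trans; [eassumption|eassumption|apply sc_sym; eassumption]
        | apply N13; eapply sc_trans; [eassumption|eassumption|apply sc_sym; eassumption]
        | apply N23; eapply sc_trans; [eassumption|eassumption|apply sc_sym; eassumption]].
Qed.

Lemma exists_nonS C x : k_clustering D 3 C -> D x ->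
  exists z, D z /\ ~ same_cluster C x z.
Proof.
  intros Hk Hx. pose proof Hk as [Hcl _].
  destruct (reps Hk) as [r1 [r2 [r3 [D1 [D2 [D3 [N12 [N13 N23]]]]]]]].
  destruct (classic (same_cluster C x r1)) as [S1|S1]; [|eauto].
  exists r2; split; auto. intro S2. apply N12.
  eapply sc_trans; [eassumption| apply sc_sym; eassumption | eassumption].
Qed.

Lemma fam_of_same C1 C2 : is_clustering D C1 -> is_clustering D C2 ->
  (forall x y, D x -> D y -> (same_cluster C1 x y <-> same_cluster C2 x y)) ->
  fam_eq C1 C2.
Proof.
  intros H1 H2 Heq. pose proof H1 as [Hne1 [Hd1 Hc1]]. pose proof H2 as [Hne2 [Hd2 Hc2]].
  split.
  - intros A HA. destruct (Hne1 A HA) as [[a Ha] HAD].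
    destruct (Hc2 a (HAD a Ha)) as [B [HB HBa]].
    exists B; split; auto. intro y; split; intro Hy.
    + assert (S2 : same_cluster C2 a y).
      { apply Heq; auto. exists A; auto. }
      destruct S2 as [B' [HB' [Ha' Hy']]].
      apply (Hd2 B' B HB' HB (ex_intro _ a (conj Ha' HBa))); auto.
    + assert (Dy : D y) by (apply (proj2 (Hne2 B HB)); auto).
      assert (S1 : same_cluster C1 a y).
      { apply Heq; auto. exists B; auto. }
      destruct S1 as [A' [HA' [Ha' Hy']]].
      apply (Hd1 A' A HA' HA (ex_intro _ a (conj Ha' Ha))); auto.
  - intros B HB. destruct (Hne2 B HB) as [[a Ha] HBD].
    destruct (Hc1 a (HBD a Ha)) as [A [HA HAa]].
    exists A; split; auto. intro y; split; intro Hy.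
    + assert (Dy : D y) by (apply (proj2 (Hne1 A HA)); auto).
      assert (S2 : same_cluster C2 a y).
      { apply Heq; auto. exists A; auto. }
      destruct S2 as [B' [HB' [Ha' Hy']]].
      apply (Hd2 B' B HB' HB (ex_intro _ a (conj Ha' Ha))); auto.
    + assert (S1 : same_cluster C1 a y).
      { apply Heq; auto. exists B; auto. }
      destruct S1 as [A' [HA' [Ha' Hy']]].
      apply (Hd1 A' A HA' HA (ex_intro _ a (conj Ha' HAa))); auto.
Qed.

Definition C3 (B1 B2 B3 : X -> Prop) : (X -> Prop) -> Prop :=
  fun A => A = B1 \/ A = B2 \/ A = B3.

Definition sameB (B1 B2 B3 : X -> Prop) x y :=
  (B1 x /\ B1 y) \/ (B2 x /\ B2 y) \/ (B3 x /\ B3 y).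

Definition blocks_ok (B1 B2 B3 : X -> Prop) :=
  (forall x, B1 x -> D x) /\ (forall x, B2 x -> D x) /\ (forall x, B3 x -> D x) /\
  (exists x, B1 x) /\ (exists x, B2 x) /\ (exists x, B3 x) /\
  (forall x, B1 x -> B2 x -> False) /\ (forall x, B1 x -> B3 x -> False) /\
  (forall x, B2 x -> B3 x -> False) /\
  (forall x, D x -> B1 x \/ B2 x \/ B3 x).

Lemma C3_same B1 B2 B3 x y : same_cluster (C3 B1 B2 B3) x y <-> sameB B1 B2 B3 x y.
Proof.
  unfold same_cluster, C3, sameB; split.
  - intros [A [[ -> | [ -> | -> ] ] [H1 H2]]]; auto.
  - intros [[H1 H2]|[[H1 H2]|[H1 H2]]]; [exists B1|exists B2|exists B3]; auto.
Qed.

Lemma C3_k B1 B2 B3 : blocks_ok B1 B2 B3 -> k_clustering D 3 (C3 B1 B2 B3).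
Proof.
  intros (S1 & S2 & S3 & [e1 E1] & [e2 E2] & [e3 E3] & N12 & N13 & N23 & Cov).
  split; [split; [|split]|].
  - intros A [ -> | [ -> | -> ] ]; eauto.
  - intros A B [ -> | [ -> | -> ] ] [ -> | [ -> | -> ] ] [x [Ha Hb]]; try (intro; tauto);
    exfalso; eauto.
  - intros x Hx. unfold C3. destruct (Cov x Hx) as [H|[H|H]]; eauto.
  - exists [B1; B2; B3]; split; [reflexivity|split; [|split]].
    + intros A [ <- | [ <- | [ <- | [] ] ] ]; unfold C3; auto.
    + intros A [ -> | [ -> | -> ] ]; [exists B1|exists B2|exists B3]; simpl; split; auto; intro; tauto.
    + repeat constructor; intro H; [apply (N12 e1)|apply (N13 e1)|apply (N23 e2)]; auto;
      apply H; auto.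
Qed.

Lemma C3_unique B1 B2 B3 C' : blocks_ok B1 B2 B3 -> k_clustering D 3 C' ->
  (forall x y, D x -> D y -> same_cluster C' x y -> sameB B1 B2 B3 x y) ->
  fam_eq C' (C3 B1 B2 B3).
Proof.
  intros Hb Hk Hsub. pose proof Hb as (S1 & S2 & S3 & [e1 E1] & [e2 E2] & [e3 E3] & N12 & N13 & N23 & Cov).
  apply fam_of_same. apply Hk. apply (C3_k Hb).
  intros x y Dx Dy. rewrite C3_same. split; [apply Hsub; auto|].
  intros HB. destruct (classic (same_cluster C' x y)) as [H|H]; auto. exfalso.
  destruct HB as [[Hx Hy]|[[Hx Hy]|[Hx Hy]]].
  - destruct (four Hk Dx Dy (S2 e2 E2) (S3 e3 E3)) as [F|[F|[F|[F|[F|F]]]]];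
    try (apply H; exact F);
    apply Hsub in F; auto; unfold sameB in F; firstorder.
  - destruct (four Hk Dx Dy (S1 e1 E1) (S3 e3 E3)) as [F|[F|[F|[F|[F|F]]]]];
    try (apply H; exact F);
    apply Hsub in F; auto; unfold sameB in F; firstorder.
  - destruct (four Hk Dx Dy (S1 e1 E1) (S2 e2 E2)) as [F|[F|[F|[F|[F|F]]]]];
    try (apply H; exact F);
    apply Hsub in F; auto; unfold sameB in F; firstorder.
Qed.

End Gen.
Arguments four [X D C a b c e] _ _ _ _ _.
Arguments exists_nonS [X D C x] _ _.
Arguments sc_refl [X D C x] _ _.
Arguments twoclass [X D C u v] _ _.


Inductive lab := LO | LX (i : nat) | LX' (i : nat).

Lemma lab_dec (s t : lab) : {s = t} + {s <> t}.
Proof. decide equality; apply PeanoNat.Nat.eq_dec. Qed.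

Definition valid (M : nat) (t : lab) : Prop :=
  match t with LO => True | LX i => (1 <= i <= M)%nat | LX' i => (1 <= i <= M)%nat end.
Definition idx (t : lab) : nat := match t with LO => 0%nat | LX i => i | LX' i => i end.

Section Cfg.
Variable X : Type.
Variable d : X -> X -> R.
Hypothesis Hd : is_metric d.
Variable M : nat.
Variable cf : config X.
Hypothesis Hcf : is_M_config d M cf.

Definition pc (t : lab) : X :=
  match t with LO => c_o cf | LX i => c_x cf i | LX' i => c_x' cf i end.

Lemma dsym x y : d x y = d y x.
Proof. apply Hd. Qed.

Lemma cfg_d2 t1 t2 : valid M t1 -> valid M t2 -> t1 <> t2 ->
  1 <= d (pc t1) (pc t2) <= 2.
Proof.
  destruct Hcf as (H1 & H2 & H3 & H4 & H5).
  destruct t1 as [|i|i], t2 as [|j|j]; simpl; intros V1 V2 N; unfold in12 in *;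
  try (exfalso; apply N; reflexivity).
  - apply H1; auto.
  - apply H1; auto.
  - rewrite dsym; apply H1; auto.
  - assert (i <> j) by congruence. apply H2; auto.
  - destruct (PeanoNat.Nat.eq_dec i j) as [->|Nij]. apply H1; auto. apply H2; auto.
  - rewrite dsym; apply H1; auto.
  - destruct (PeanoNat.Nat.eq_dec i j) as [->|Nij]. rewrite dsym; apply H1; auto.
    rewrite dsym; apply H2; auto.
  - assert (i <> j) by congruence. apply H2; auto.
Qed.

Lemma cfg_O t : valid M t -> t <> LO -> 3/2 < d (pc LO) (pc t).
Proof.
  destruct Hcf as (H1 & H2 & H3 & H4 & H5).
  destruct t as [|i|i]; simpl; intros V N; [congruence| |]; apply H3; auto.
Qed.

Lemma cfg_close t1 t2 : valid M t1 -> valid M t2 -> t1 <> LO -> t2 <> LO ->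
  idx t1 <> idx t2 -> d (pc t1) (pc t2) <= 3/2.
Proof.
  destruct Hcf as (H1 & H2 & H3 & H4 & H5).
  destruct t1 as [|i|i], t2 as [|j|j]; simpl; intros V1 V2 N1 N2 Nij;
  try congruence.
  - apply H4; auto.
  - apply H4; auto.
  - rewrite dsym; apply H4; auto.
  - apply H4; auto.
Qed.

Lemma cfg_iv i : valid M (LX i) -> d (pc (LX i)) (pc (LX' i)) > d (pc LO) (pc (LX i)).
Proof. destruct Hcf as (H1 & H2 & H3 & H4 & H5). simpl; intros; apply H5; auto. Qed.

Lemma cfg_in t : valid M t -> in_config M cf (pc t).
Proof.
  unfold in_config; destruct t as [|i|i]; simpl; intros V; auto;
  right; exists i; auto.
Qed.

End Cfg.

Section Lab.
Variable X : Type.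
Variable d : X -> X -> R.
Hypothesis Hd : is_metric d.
Variable M : nat.
Variables P Q : config X.
Hypothesis HP : is_M_config d M P.
Hypothesis HQ : is_M_config d M Q.
Hypothesis Hfar : forall u v, in_config M P u -> in_config M Q v -> 4 <= d u v.

Definition pt (p : bool * lab) : X := pc (if fst p then P else Q) (snd p).
Definition vp (p : bool * lab) := valid M (snd p).

Lemma d0 x : d x x = 0.
Proof. apply Hd; reflexivity. Qed.
Lemma dge0 x y : 0 <= d x y.
Proof. apply Hd. Qed.
Lemma dpos x y : x <> y -> 0 < d x y.
Proof. intros N. destruct (dge0 x y) as [H|H]; auto. exfalso; apply N; apply Hd; auto. Qed.

Lemma pt_far p q : vp p -> vp q -> fst p <> fst q -> 4 <= d (pt p) (pt q).
Proof.
  destruct p as [[|] s], q as [[|] t]; unfold vp, pt; simpl; intros Vp Vq N; try congruence.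
  - apply Hfar; apply cfg_in; auto.
  - rewrite (dsym Hd); apply Hfar; apply cfg_in; auto.
Qed.

Lemma pt_d2 p q : vp p -> vp q -> p <> q -> fst p = fst q -> 1 <= d (pt p) (pt q) <= 2.
Proof.
  destruct p as [[|] s], q as [[|] t]; unfold vp, pt; simpl; intros Vp Vq N E; try congruence.
  - apply (cfg_d2 Hd HP); auto; congruence.
  - apply (cfg_d2 Hd HQ); auto; congruence.
Qed.
Arguments pt_d2 [p q] _ _ _ _.


Lemma pt_le2 p q : vp p -> vp q -> fst p = fst q -> d (pt p) (pt q) <= 2.
Proof.
  intros Vp Vq E. destruct (classic (p = q)) as [<-|N].
  - rewrite d0; lra.
  - apply pt_d2; auto.
Qed.
Arguments pt_le2 [p q] _ _ _.


Lemma pt_inj p q : vp p -> vp q -> pt p = pt q -> p = q.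
Proof.
  intros Vp Vq E. destruct (classic (p = q)) as [|N]; auto. exfalso.
  destruct (classic (fst p = fst q)) as [F|F].
  - pose proof (pt_d2 Vp Vq N F). rewrite E, d0 in H. lra.
  - pose proof (pt_far p q Vp Vq F). rewrite E, d0 in H. lra.
Qed.

Lemma pt_O w t : vp (w, t) -> t <> LO -> 3/2 < d (pt (w, LO)) (pt (w, t)).
Proof. unfold vp, pt; simpl; intros; destruct w; [apply (cfg_O HP)|apply (cfg_O HQ)]; auto. Qed.
Arguments pt_O [w t] _ _.


Lemma pt_close w t1 t2 : vp (w,t1) -> vp (w,t2) -> t1 <> LO -> t2 <> LO ->
  idx t1 <> idx t2 -> d (pt (w,t1)) (pt (w,t2)) <= 3/2.
Proof. unfold vp, pt; simpl; intros; destruct w; [apply (cfg_close Hd HP)|apply (cfg_close Hd HQ)]; auto. Qed.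
Arguments pt_close [w t1 t2] _ _ _ _ _.


Lemma pt_iv w i : vp (w, LX i) -> d (pt (w, LX i)) (pt (w, LX' i)) > d (pt (w, LO)) (pt (w, LX i)).
Proof. unfold vp, pt; simpl; intros; destruct w; [apply (cfg_iv HP)|apply (cfg_iv HQ)]; auto. Qed.
Arguments pt_iv [w i] _.



Definition Dl (lp : list (bool * lab)) (x : X) : Prop := List.In x (map pt lp).
Definition allv (lp : list (bool * lab)) := forall p, List.In p lp -> vp p.

Lemma Dl_pt lp p : List.In p lp -> Dl lp (pt p).
Proof. intros; apply in_map; auto. Qed.
Arguments Dl_pt [lp p] _.

Lemma Dl_inv lp x : Dl lp x -> exists p, List.In p lp /\ x = pt p.
Proof. unfold Dl; rewrite in_map_iff; intros [p [<- H]]; eauto. Qed.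
Arguments Dl_inv [lp x] _.

Lemma nodup_map_pt lp : allv lp -> NoDup lp -> NoDup (map pt lp).
Proof.
  induction lp as [|a l IH]; simpl; intros Hv Hn; constructor.
  - rewrite in_map_iff; intros [b [E Hb]].
    inversion Hn; subst. apply H1. replace a with b; auto.
    apply pt_inj; auto; apply Hv; simpl; auto.
  - inversion Hn; subst; apply IH; auto. intros p Hp; apply Hv; simpl; auto.
Qed.

Lemma bool_other (s U : bool) : s <> U -> s = negb U.
Proof. destruct s, U; simpl; congruence. Qed.

Lemma same_idx_pair t1 t2 : t1 <> LO -> t2 <> LO -> idx t1 = idx t2 -> t1 <> t2 ->
  (t1 = LX (idx t1) /\ t2 = LX' (idx t1)) \/ (t1 = LX' (idx t1) /\ t2 = LX (idx t1)).
Proof. destruct t1, t2; simpl; intros; subst; try congruence; auto. Qed.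

Section DS.
Variable lp : list (bool * lab).
Hypothesis Hv : allv lp.
Variable C : (X -> Prop) -> Prop.
Hypothesis Hk : k_clustering (Dl lp) 3 C.
Hypothesis Hn : nice d (Dl lp) C.

Lemma sep p q : List.In p lp -> List.In q lp -> fst p <> fst q ->
  ~ same_cluster C (pt p) (pt q).
Proof.
  intros Hp Hq F S.
  destruct (exists_nonS Hk (Dl_pt Hp)) as [z [Dz Nz]].
  destruct (Dl_inv Dz) as [r [Hr ->]].
  destruct (Bool.bool_dec (fst r) (fst p)) as [E|E].
  - pose proof (Hn (Dl_pt Hp) (Dl_pt Hq) Dz S Nz).
    pose proof (pt_far q p (Hv _ Hq) (Hv _ Hp) (fun e => F (eq_sym e))).
    pose proof (pt_le2 (Hv _ Hr) (Hv _ Hp) E). lra.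
  - assert (E' : fst r = fst q).
    { destruct (fst r), (fst p), (fst q); simpl in *; congruence. }
    assert (Nq : ~ same_cluster C (pt q) (pt r)).
    { intro S'. apply Nz. eapply sc_trans; eauto. apply Hk. }
    pose proof (Hn (Dl_pt Hq) (Dl_pt Hp) Dz (sc_sym S) Nq).
    pose proof (pt_far p q (Hv _ Hp) (Hv _ Hq) F).
    pose proof (pt_le2 (Hv _ Hr) (Hv _ Hq) E'). lra.
Qed.

Lemma close w a c : List.In (w, LO) lp -> (exists q, List.In q lp /\ fst q <> w) ->
  List.In (w, a) lp -> List.In (w, c) lp -> a <> LO -> c <> LO -> idx a <> idx c ->
  same_cluster C (pt (w, a)) (pt (w, c)).
Proof.
  intros Ho [q [Hq Fq]] Ha Hc Na Nc Ni.
  destruct (classic (same_cluster C (pt (w, a)) (pt (w, c)))) as [S|N]; auto. exfalso.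
  destruct (four Hk (Dl_pt Ho) (Dl_pt Ha) (Dl_pt Hc) (Dl_pt Hq)) as [F|[F|[F|[F|[F|F]]]]].
  - pose proof (Hn (Dl_pt Ha) (Dl_pt Ho) (Dl_pt Hc) (sc_sym F) N).
    pose proof (pt_O (Hv _ Ha) Na).
    pose proof (pt_close (Hv _ Hc) (Hv _ Ha) Nc Na (fun e => Ni (eq_sym e))). lra.
  - assert (N' : ~ same_cluster C (pt (w, c)) (pt (w, a))) by (intro; apply N; apply sc_sym; auto).
    pose proof (Hn (Dl_pt Hc) (Dl_pt Ho) (Dl_pt Ha) (sc_sym F) N').
    pose proof (pt_O (Hv _ Hc) Nc).
    pose proof (pt_close (Hv _ Ha) (Hv _ Hc) Na Nc Ni). lra.
  - eapply sep; [exact Ho| exact Hq| simpl; congruence| exact F].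
  - exact (N F).
  - eapply sep; [exact Ha| exact Hq| simpl; congruence| exact F].
  - eapply sep; [exact Hc| exact Hq| simpl; congruence| exact F].
Qed.

End DS.
Arguments sep [lp] _ [C] _ _ [p q] _ _ _ _.
Arguments close [lp] _ [C] _ _ [w a c] _ _ _ _ _ _ _.

Definition Good (lp : list (bool * lab)) (U : bool) (j : nat) : Prop :=
  NoDup lp /\ allv lp /\ List.In (U, LO) lp /\ List.In (negb U, LO) lp /\
  List.In (U, LX j) lp /\ List.In (U, LX' j) lp /\
  (forall i, List.In (U, LX i) lp -> List.In (U, LX' i) lp -> i = j) /\
  (exists t, List.In (U, t) lp /\ t <> LO /\ idx t <> j) /\
  (forall i, List.In (negb U, LX i) lp -> List.In (negb U, LX' i) lp -> False) /\
  (exists t, List.In (negb U, t) lp /\ t <> LO).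

Lemma key lp U j : Good lp U j ->
  exists C, unique_nice_k_clustering d (Dl lp) 3 C /\
   (forall t1 t2, List.In (U, t1) lp -> List.In (U, t2) lp ->
      same_cluster C (pt (U, t1)) (pt (U, t2))) /\
   (forall t, List.In (negb U, t) lp -> t <> LO ->
      ~ same_cluster C (pt (negb U, LO)) (pt (negb U, t))).
Proof.
  intros (Hnd & Hv & HUo & HVo & HXj & HX'j & Hpair & [t0 [Ht0 [Nt0 It0]]] & Hfree & [v0 [Hv0 Nv0]]).
  set (B1 := fun x => exists t, List.In (U, t) lp /\ x = pt (U, t)).
  set (B2 := fun x => x = pt (negb U, LO)).
  set (B3 := fun x => exists t, List.In (negb U, t) lp /\ t <> LO /\ x = pt (negb U, t)).
  assert (NUV : U <> negb U) by (destruct U; discriminate).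
  assert (Hb : blocks_ok (Dl lp) B1 B2 B3).
  { unfold blocks_ok, B1, B2, B3; repeat split.
    - intros x [t [H ->]]; apply Dl_pt; auto.
    - intros x ->; apply Dl_pt; auto.
    - intros x [t [H [_ ->]]]; apply Dl_pt; auto.
    - eauto.
    - eauto.
    - eauto.
    - intros x [t [H ->]] E. apply pt_inj in E; [congruence| apply Hv; auto | apply Hv; auto].
    - intros x [t [H ->]] [t' [H' [_ E]]]. apply pt_inj in E; [congruence| apply Hv; auto | apply Hv; auto].
    - intros x -> [t' [H' [N' E]]]. apply pt_inj in E; [congruence| apply Hv; auto | apply Hv; auto].
    - intros x Dx. destruct (Dl_inv Dx) as [[s t] [H ->]].
      destruct (Bool.bool_dec s U) as [->|N]; [left; eauto|].
      apply bool_other in N; subst s.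
      destruct (lab_dec t LO) as [->|N]; [right; left; auto| right; right; eauto]. }
  assert (Vclose : forall t1 t2, List.In (negb U, t1) lp -> List.In (negb U, t2) lp ->
            t1 <> LO -> t2 <> LO -> t1 <> t2 -> idx t1 <> idx t2).
  { intros t1 t2 H1 H2 N1 N2 N12 E.
    destruct (same_idx_pair N1 N2 E N12) as [[E1 E2]|[E1 E2]]; rewrite E1 in H1; rewrite E2 in H2;
    eapply Hfree; eauto. }
  exists (C3 B1 B2 B3). split; [split; [apply (C3_k Hb)| split]|].
  -
    intros x y z Dx Dy Dz Sxy Nxz. rewrite C3_same in Sxy, Nxz.
    destruct (Dl_inv Dz) as [pz [Hz ->]].
    destruct Sxy as [[[tx [Hx ->]] [ty [Hy ->]]]|[[-> ->]|[[tx [Hx [Nx ->]]] [ty [Hy [Ny ->]]]]]].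
    + assert (Fz : fst pz <> U).
      { intro E. apply Nxz. left. split; [exists tx; auto|]. exists (snd pz).
        destruct pz; simpl in *; subst; auto. }
      pose proof (pt_far pz (U, tx) (Hv _ Hz) (Hv _ Hx) Fz).
      pose proof (pt_le2 (Hv _ Hy) (Hv _ Hx) eq_refl). lra.
    + rewrite d0. apply dpos. intro E. apply Nxz. right; left; unfold B2; auto.
    + destruct (Bool.bool_dec (fst pz) (negb U)) as [Fz|Fz].
      * destruct pz as [sz tz]; simpl in Fz; subst sz.
        destruct (lab_dec tz LO) as [->|Nz].
        -- pose proof (pt_O (Hv _ Hx) Nx).
           destruct (lab_dec ty tx) as [->|Nyx]; [rewrite d0; lra|].
           pose proof (pt_close (Hv _ Hy) (Hv _ Hx) Ny Nx (Vclose _ _ Hy Hx Ny Nx Nyx)). lra.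
        -- exfalso. apply Nxz. right; right. split; [exists tx; auto | exists tz; auto].
      * pose proof (pt_far pz (negb U, tx) (Hv _ Hz) (Hv _ Hx) Fz).
        pose proof (pt_le2 (Hv _ Hy) (Hv _ Hx) eq_refl). lra.
  -
    intros C' Hk' Hn'. apply (C3_unique Hb Hk').
    assert (Ho : exists q, List.In q lp /\ fst q <> negb U) by (exists (U, LO); simpl; auto).
    assert (Ho' : exists q, List.In q lp /\ fst q <> U) by (exists (negb U, LO); simpl; auto).
    assert (F1 : forall t, List.In (U, t) lp -> t <> LO -> same_cluster C' (pt (U, t)) (pt (U, t0))).
    { intros t Ht Nt. destruct (PeanoNat.Nat.eq_dec (idx t) (idx t0)) as [E|NE].
      - destruct (lab_dec t t0) as [->|N]; [apply (sc_refl (proj1 Hk')); apply Dl_pt; auto|].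
        exfalso. destruct (same_idx_pair Nt Nt0 E N) as [[E1 E2]|[E1 E2]]; apply It0; rewrite <- E; apply Hpair.
        + rewrite <- E1; exact Ht.
        + rewrite <- E2; exact Ht0.
        + rewrite <- E2; exact Ht0.
        + rewrite <- E1; exact Ht.
      - apply (close Hv Hk' Hn' HUo Ho' Ht Ht0 Nt Nt0 NE). }
    assert (F1' : forall t, List.In (U, t) lp -> same_cluster C' (pt (U, t)) (pt (U, t0))).
    { intros t Ht. destruct (lab_dec t LO) as [->|Nt]; [|apply F1; auto].
      destruct (classic (same_cluster C' (pt (U, LO)) (pt (U, t0)))) as [S|N]; auto. exfalso.
      assert (S1 := F1 _ HXj ltac:(discriminate)).
      assert (S2 := F1 _ HX'j ltac:(discriminate)).
      assert (S12 : same_cluster C' (pt (U, LX j)) (pt (U, LX' j)))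
        by (eapply sc_trans; [apply Hk'|exact S1|apply sc_sym; exact S2]).
      assert (N1 : ~ same_cluster C' (pt (U, LX j)) (pt (U, LO))).
      { intro S3. apply N. eapply sc_trans; [apply Hk'|apply sc_sym; exact S3|exact S1]. }
      pose proof (Hn' _ _ _ (Dl_pt HXj) (Dl_pt HX'j) (Dl_pt HUo) S12 N1).
      pose proof (pt_iv (Hv _ HXj)). rewrite (dsym Hd (pt (U, LX' j))) in H. lra. }
    assert (F2 : forall t, List.In (negb U, t) lp -> t <> LO ->
               same_cluster C' (pt (negb U, t)) (pt (negb U, v0))).
    { intros t Ht Nt. destruct (lab_dec t v0) as [->|N].
      - apply (sc_refl (proj1 Hk')); apply Dl_pt; auto.
      - apply (close Hv Hk' Hn' HVo Ho Ht Hv0 Nt Nv0 (Vclose _ _ Ht Hv0 Nt Nv0 N)). }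
    assert (NO : forall t, List.In (negb U, t) lp -> t <> LO ->
               ~ same_cluster C' (pt (negb U, LO)) (pt (negb U, t))).
    { intros t Ht Nt S. apply (twoclass (u := pt (U, t0)) (v := pt (negb U, v0)) Hk').
      intros z Dz. destruct (Dl_inv Dz) as [[s tz] [Hz ->]].
      destruct (Bool.bool_dec s U) as [->|Ns]; [left; auto|right].
      apply bool_other in Ns; subst s.
      destruct (lab_dec tz LO) as [->|Nz]; [|apply F2; auto].
      eapply sc_trans; [apply Hk'|exact S|apply F2; auto]. }
    intros x y Dx Dy Sxy.
    destruct (Dl_inv Dx) as [[sx tx] [Hx ->]]. destruct (Dl_inv Dy) as [[sy ty] [Hy ->]].
    destruct (Bool.bool_dec sx sy) as [<-|Ns].
    2: { exfalso. apply (sep Hv Hk' Hn' Hx Hy Ns Sxy). }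
    destruct (Bool.bool_dec sx U) as [->|Nx].
    + left; split; [exists tx|exists ty]; auto.
    + apply bool_other in Nx; subst sx.
      destruct (lab_dec tx LO) as [->|Ntx]; destruct (lab_dec ty LO) as [->|Nty].
      * right; left; unfold B2; auto.
      * exfalso; apply (NO ty Hy Nty Sxy).
      * exfalso; apply (NO tx Hx Ntx (sc_sym Sxy)).
      * right; right; split; [exists tx|exists ty]; auto.
  - split.
    + intros t1 t2 H1 H2. rewrite C3_same. left; split; [exists t1|exists t2]; auto.
    + intros t Ht Nt. rewrite C3_same. intros [[[t1 [H1 E1]] _]|[[_ E]|[[t1 [H1 [N1 E1]]] _]]].
      * apply pt_inj in E1; [congruence|apply Hv; auto|apply Hv; auto].
      * unfold B2 in E. apply pt_inj in E; [congruence|apply Hv; auto|apply Hv; auto].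
      * apply pt_inj in E1; [congruence|apply Hv; auto|apply Hv; auto].
Qed.

End Lab.


Lemma rs1 (X : Type) (Pi : (X -> Prop) -> Prop) (D : X -> Prop) C x y :
  fam_eq (restrict Pi D) C -> same_cluster C x y -> exists B, Pi B /\ B x /\ B y.
Proof.
  intros [_ H2] [A [HA [Hx Hy]]].
  destruct (H2 A HA) as [A0 [[B [HB [_ HE]]] Heq]].
  exists B; split; auto. split.
  - apply Heq in Hx. apply HE in Hx. tauto.
  - apply Heq in Hy. apply HE in Hy. tauto.
Qed.

Lemma rs2 (X : Type) (Pi : (X -> Prop) -> Prop) (D : X -> Prop) C x y :
  fam_eq (restrict Pi D) C -> D x -> D y -> (exists B, Pi B /\ B x /\ B y) -> same_cluster C x y.
Proof.
  intros [H1 _] Dx Dy [B [HB [Bx By]]].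
  destruct (H1 (fun z => B z /\ D z)) as [A [HA Heq]].
  - exists B; split; auto. split; [exists x; auto|]. intro; tauto.
  - exists A; split; auto. split; apply Heq; auto.
Qed.

Lemma run_app (S X : Type) (tau : S -> X -> S) s0 l1 l2 :
  run tau s0 (l1 ++ l2) = run tau (run tau s0 l1) l2.
Proof. unfold run; apply fold_left_app. Qed.

Fixpoint allbl (n : nat) : list (list bool) :=
  match n with
  | O => [[]]
  | S n => map (cons true) (allbl n) ++ map (cons false) (allbl n)
  end.

Lemma allbl_len n : length (allbl n) = (2 ^ n)%nat.
Proof.
  induction n; simpl; auto. rewrite length_app, !length_map, IHn. lia.
Qed.

Lemma allbl_in n l : length l = n -> In l (allbl n).
Proof.
  revert l; induction n; intros l Hl; destruct l as [|c l]; simpl in *; try discriminate; auto.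
  apply in_or_app. injection Hl as Hl. destruct c; [left|right]; apply in_map; auto.
Qed.

Lemma allbl_nodup n : NoDup (allbl n).
Proof.
  induction n; simpl. repeat constructor; simpl; tauto.
  apply NoDup_app.
  - apply FinFun.Injective_map_NoDup; auto. intros a b E; injection E; auto.
  - apply FinFun.Injective_map_NoDup; auto. intros a b E; injection E; auto.
  - intros a Ha Hb. apply in_map_iff in Ha as [x [<- _]]. apply in_map_iff in Hb as [y [E _]]. discriminate.
Qed.

Lemma allbl_len_in n l : In l (allbl n) -> length l = n.
Proof.
  revert l; induction n; simpl; intros l H.
  - destruct H as [<-|[]]; auto.
  - apply in_app_iff in H as [H|H]; apply in_map_iff in H as [l' [<- H]]; simpl; f_equal; auto.
Qed.

Lemma notnodup_map (A B : Type) (f : A -> B) l : NoDup l -> ~ NoDup (map f l) ->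
  exists a1 a2, In a1 l /\ In a2 l /\ a1 <> a2 /\ f a1 = f a2.
Proof.
  induction l as [|a l IH]; simpl; intros Hn Hm.
  - exfalso; apply Hm; constructor.
  - inversion Hn; subst.
    destruct (classic (exists b, In b l /\ f b = f a)) as [[b [Hb E]]|N].
    + exists a, b; repeat split; auto. intro; subst; auto.
    + destruct IH as [a1 [a2 [G1 [G2 [G3 G4]]]]]; auto.
      * intro Hm'. apply Hm. constructor; auto. intro Hin. apply in_map_iff in Hin as [b [E Hb]]. eauto.
      * exists a1, a2; auto.
Qed.

Lemma ph (A B : Type) (f : A -> B) l L : NoDup l -> (forall a, In a l -> In (f a) L) ->
  (length L < length l)%nat -> exists a1 a2, In a1 l /\ In a2 l /\ a1 <> a2 /\ f a1 = f a2.
Proof.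
  intros Hn Hin Hlt. apply notnodup_map; auto. intro Hm.
  assert (incl (map f l) L) by (intros b Hb; apply in_map_iff in Hb as [a [<- Ha]]; auto).
  pose proof (NoDup_incl_length Hm H). rewrite length_map in H0. lia.
Qed.

Lemma diff_idx (l1 l2 : list bool) : length l1 = length l2 -> l1 <> l2 ->
  exists i, (i < length l1)%nat /\ nth i l1 false <> nth i l2 false.
Proof.
  revert l2; induction l1 as [|a l1 IH]; intros [|c l2] E N; simpl in *; try discriminate.
  - congruence.
  - destruct (Bool.bool_dec a c) as [->|Nac].
    + destruct (IH l2) as [i [Hi Hn]]; auto. congruence. exists (S i); split; auto; lia.
    + exists O; split; auto; lia.
Qed.

Lemma vec_state (b : nat) (A : Type) (g : A -> Vector.t bool b) (l : list A) :
  NoDup l -> (2 ^ b < length l)%nat ->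
  exists a1 a2, In a1 l /\ In a2 l /\ a1 <> a2 /\ g a1 = g a2.
Proof.
  intros Hn Hl.
  destruct (ph (fun a => VectorDef.to_list (g a)) (allbl b) Hn) as [a1 [a2 [H1 [H2 [H3 H4]]]]].
  - intros a _. apply allbl_in. apply VectorSpec.length_to_list.
  - rewrite allbl_len; auto.
  - exists a1, a2; repeat split; auto. apply VectorSpec.to_list_inj; auto.
Qed.

Fixpoint pre_aux (n : nat) (bs : list bool) : list (bool * lab) :=
  match bs with
  | [] => []
  | c :: bs' => (c, LX n) :: pre_aux (S n) bs'
  end.

Lemma In_pre_aux n bs p : In p (pre_aux n bs) <->
  exists i, (i < length bs)%nat /\ p = (nth i bs false, LX (n + i)).
Proof.
  revert n; induction bs as [|c bs IH]; intros n; simpl.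
  - split; [tauto|]. intros [i [Hi _]]; lia.
  - rewrite IH. split.
    + intros [<-|[i [Hi ->]]].
      * exists O; split; [lia|]. rewrite PeanoNat.Nat.add_0_r; auto.
      * exists (S i); split; [lia|]. simpl. repeat f_equal. lia.
    + intros [[|i] [Hi ->]].
      * left. rewrite PeanoNat.Nat.add_0_r; auto.
      * right. exists i; split; [lia|]. simpl. repeat f_equal. lia.
Qed.

Lemma nodup_pre_aux n bs : NoDup (pre_aux n bs).
Proof.
  revert n; induction bs as [|c bs IH]; intros n; simpl; constructor; auto.
  rewrite In_pre_aux. intros [i [_ E]]. injection E; intros; lia.
Qed.

Definition suf (j : nat) : list (bool * lab) :=
  [(true, LO); (true, LX' j); (false, LO); (false, LX' j)].

Definition pre (r : nat) (bs : list bool) : list (bool * lab) :=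
  (true, LX r) :: (false, LX r) :: pre_aux 1 bs.

Lemma In_gen r bs j p : In p (pre r bs ++ suf j) <->
  p = (true, LX r) \/ p = (false, LX r) \/
  (exists i, (i < length bs)%nat /\ p = (nth i bs false, LX (S i))) \/
  p = (true, LO) \/ p = (true, LX' j) \/ p = (false, LO) \/ p = (false, LX' j).
Proof.
  unfold pre, suf. rewrite in_app_iff. simpl. rewrite In_pre_aux. simpl.
  split; intros H; repeat destruct H as [H|H]; subst; try tauto;
  try (destruct H as [i [Hi E]]; subst; do 2 right; left; eauto; fail).
  all: idtac.
Qed.

Lemma good_gen M b bs c i : (S (S b) <= M)%nat -> length bs = S b -> (i < S b)%nat ->
  nth i bs false = c -> Good M (pre (S (S b)) bs ++ suf (S i)) c (S i).
Proof.
  intros HM Hl Hi Hc.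
  unfold Good; repeat split.
  - unfold pre. simpl. constructor; [|constructor].
    + intros H. destruct H as [H|H]; [discriminate|]. apply in_app_iff in H as [H|H].
      * apply In_pre_aux in H as [i' [Hi' E]]; injection E; intros; lia.
      * unfold suf in H; simpl in H; intuition discriminate.
    + intros H. apply in_app_iff in H as [H|H].
      * apply In_pre_aux in H as [i' [Hi' E]]; injection E; intros; lia.
      * unfold suf in H; simpl in H; intuition discriminate.
    + apply NoDup_app. apply nodup_pre_aux.
      * unfold suf. repeat constructor; simpl; intuition discriminate.
      * intros a Ha Hb. rewrite In_pre_aux in Ha. destruct Ha as [i' [_ ->]].
        simpl in Hb; intuition discriminate.
  - intros p Hp. rewrite In_gen in Hp. unfold vp, valid.
    repeat destruct Hp as [Hp|Hp]; subst; simpl; try lia; auto.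
    destruct Hp as [i' [Hi' ->]]; simpl; lia.
  - rewrite In_gen; destruct c; tauto.
  - rewrite In_gen; destruct c; simpl; tauto.
  - rewrite In_gen. do 2 right; left. exists i; split; [lia|]. rewrite Hc; auto.
  - rewrite In_gen; destruct c; tauto.
  - intros i' _ H. rewrite In_gen in H. repeat destruct H as [H|H]; try (injection H; intros; lia);
    try discriminate. destruct H as [? [_ E]]; discriminate.
  - exists (LX (S (S b))). split; [rewrite In_gen; destruct c; tauto|]. split; [discriminate|]. simpl; lia.
  - intros i' H1 H2. rewrite In_gen in H1, H2.
    assert (i' = S i).
    { repeat destruct H2 as [H2|H2]; try (injection H2; intros; lia); try discriminate;
      try (destruct H2 as [? [_ E]]; discriminate). }
    subst i'.
    repeat destruct H1 as [H1|H1]; try (injection H1; intros; lia); try discriminate.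
    destruct H1 as [i' [_ E]]. injection E; intros E1 E2. assert (i' = i) by lia. subst i'.
    rewrite Hc in E2. destruct c; discriminate.
  - exists (LX (S (S b))). split; [rewrite In_gen; destruct c; tauto|discriminate].
Qed.

Section Main.
Variable X : Type.
Variable d : X -> X -> R.
Hypothesis Hd : is_metric d.
Variable M : nat.
Variables P Q : config X.
Hypothesis HP : is_M_config d M P.
Hypothesis HQ : is_M_config d M Q.
Hypothesis Hfar : forall u v, in_config M P u -> in_config M Q v -> 4 <= d u v.
Variable b : nat.
Variable s0 : Vector.t bool b.
Variable tau : Vector.t bool b -> X -> Vector.t bool b.
Variable omega : Vector.t bool b -> (X -> Prop) -> Prop.
Hypothesis Halg : forall (l : list X), List.NoDup l ->
        forall C, unique_nice_k_clustering d (fun x => List.In x l) 3 C ->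
        fam_eq (restrict (omega (run tau s0 l)) (fun x => List.In x l)) C.

Notation ptq := (pt P Q).

Lemma conflict pa pb s j j' t :
  run tau s0 (map ptq pa) = run tau s0 (map ptq pb) ->
  Good M (pa ++ s) true j -> Good M (pb ++ s) false j' ->
  In (true, LO) s -> In (true, t) s -> t <> LO -> False.
Proof.
  intros Hst Ga Gb Ho Ht Nt.
  destruct (key Hd HP HQ Hfar Ga) as [C1 [U1 [A1 _]]].
  destruct (key Hd HP HQ Hfar Gb) as [C2 [U2 [_ B2]]].
  assert (HA := Halg (nodup_map_pt Hd HP HQ Hfar (proj1 (proj2 Ga)) (proj1 Ga)) U1).
  assert (HB := Halg (nodup_map_pt Hd HP HQ Hfar (proj1 (proj2 Gb)) (proj1 Gb)) U2).
  assert (S1 := A1 LO t ltac:(apply in_or_app; right; auto) ltac:(apply in_or_app; right; auto)).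
  destruct (rs1 HA S1) as [B [HBp [Bx By]]].
  rewrite map_app, run_app, Hst, <- run_app, <- map_app in HBp.
  apply (B2 t ltac:(apply in_or_app; right; auto) Nt).
  apply (rs2 HB); [apply in_map; apply in_or_app; right; auto| apply in_map; apply in_or_app; right; auto|].
  exists B; auto.
Qed.

Lemma general_case : (S (S b) <= M)%nat -> False.
Proof.
  intros HM.
  destruct (vec_state (fun bs => run tau s0 (map ptq (pre (S (S b)) bs))) (allbl_nodup (S b)))
    as [bs1 [bs2 [H1 [H2 [N E]]]]].
  { rewrite allbl_len. simpl. pose proof (PeanoNat.Nat.pow_nonzero 2 b ltac:(lia)). lia. }
  apply allbl_len_in in H1. apply allbl_len_in in H2.
  destruct (diff_idx (l1 := bs1) (l2 := bs2) ltac:(congruence) N) as [i [Hi Hne]].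
  rewrite H1 in Hi.
  destruct (nth i bs1 false) eqn:E1.
  - assert (E2 : nth i bs2 false = false) by (destruct (nth i bs2 false); congruence).
    apply (conflict (pre (S (S b)) bs1) (pre (S (S b)) bs2) (suf (S i)) (j := S i) (j' := S i) (t := LX' (S i)) E);
      [apply good_gen; auto | apply good_gen; auto | simpl; auto | simpl; auto | discriminate].
  - assert (E2 : nth i bs2 false = true) by (destruct (nth i bs2 false); congruence).
    apply (conflict (pre (S (S b)) bs2) (pre (S (S b)) bs1) (suf (S i)) (j := S i) (j' := S i) (t := LX' (S i)) (eq_sym E));
      [apply good_gen; auto | apply good_gen; auto | simpl; auto | simpl; auto | discriminate].
Qed.

Definition pref (n : nat) : list (bool * lab) :=
  match n with
  | O => [(false, LX 1); (false, LX 2)]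
  | 1%nat => [(true, LX 1); (false, LX 2)]
  | _ => [(true, LX 1); (true, LX 2)]
  end.

Definition s10 := [(true, LO); (true, LX' 1); (false, LO); (false, LX' 1); (true, LX' 2)].
Definition s21 := [(true, LO); (true, LX' 2); (false, LO); (false, LX' 2); (false, LX' 1)].

Ltac good_tac t1 t2 :=
  unfold Good; cbv [pref s10 s21 suf app]; repeat split;
  try (repeat constructor; simpl; intuition discriminate; fail);
  try (let p := fresh "p" in let G := fresh "G" in intros p G; simpl in G; intuition subst; unfold vp, valid; simpl; lia; fail);
  try (simpl; tauto; fail);
  try (let i := fresh "i" in let G1 := fresh "G" in let G2 := fresh "G" in intros i G1 G2; simpl in *; intuition congruence; fail);
  [ exists t1; split; [simpl; tauto| split; [discriminate| simpl; lia]]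
  | exists t2; split; [simpl; tauto| discriminate] ].

Lemma b1_case : b = 1%nat -> (2 <= M)%nat -> False.
Proof.
  intros Hb HM.
  destruct (vec_state (fun n => run tau s0 (map ptq (pref n))) (l := [0%nat; 1%nat; 2%nat]))
    as [a1 [a2 [H1 [H2 [N E]]]]].
  { repeat constructor; simpl; intuition discriminate. }
  { subst b; simpl; lia. }
  assert (G1t : Good M (pref 1 ++ s10) true 1) by good_tac (LX' 2) (LX 2).
  assert (G0f : Good M (pref 0 ++ s10) false 1) by good_tac (LX 2) (LX' 2).
  assert (G2t : Good M (pref 2 ++ s21) true 2) by good_tac (LX 1) (LX' 1).
  assert (G1f : Good M (pref 1 ++ s21) false 2) by good_tac (LX' 1) (LX 1).
  assert (G2t' : Good M (pref 2 ++ suf 1) true 1) by good_tac (LX 2) (LX' 1).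
  assert (G0f' : Good M (pref 0 ++ suf 1) false 1) by good_tac (LX 2) (LX' 1).
  simpl in H1, H2.
  destruct H1 as [<-|[<-|[<-|[]]]]; destruct H2 as [<-|[<-|[<-|[]]]]; try (apply N; reflexivity).
  - apply (conflict (pref 1) (pref 0) s10 (eq_sym E) G1t G0f (t := LX' 1)); simpl; auto; discriminate.
  - apply (conflict (pref 2) (pref 0) (suf 1) (eq_sym E) G2t' G0f' (t := LX' 1)); simpl; auto; discriminate.
  - apply (conflict (pref 1) (pref 0) s10 E G1t G0f (t := LX' 1)); simpl; auto; discriminate.
  - apply (conflict (pref 2) (pref 1) s21 (eq_sym E) G2t G1f (t := LX' 2)); simpl; auto; discriminate.
  - apply (conflict (pref 2) (pref 0) (suf 1) E G2t' G0f' (t := LX' 1)); simpl; auto; discriminate.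
  - apply (conflict (pref 2) (pref 1) s21 E G2t G1f (t := LX' 2)); simpl; auto; discriminate.
Qed.

Ltac vpt := unfold vp, valid; simpl; try lia; try exact I.
Ltac bnd a b :=
  let H := fresh "Bd" in
  first [ constr_eq a b; assert (H : d (ptq a) (ptq b) = 0) by apply (d0 Hd)
        | assert (H : 1 <= d (ptq a) (ptq b) <= 2)
            by (apply (pt_d2 Hd HP HQ); [vpt|vpt|discriminate|reflexivity])
        | assert (H : 4 <= d (ptq a) (ptq b)) by (apply (pt_far Hd Hfar); [vpt|vpt|discriminate]) ].
Ltac niceg := match goal with |- d (ptq ?y) (ptq ?x) < d (ptq ?z) (ptq ?x) => bnd y x; bnd z x end.
Ltac ptneq := let E := fresh "E" in intro E; apply (pt_inj Hd HP HQ Hfar) in E; [discriminate|vpt|vpt].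
Ltac indl := apply Dl_pt; simpl; tauto.
Ltac dinv Dx x := let p := fresh "p" in let Hp := fresh "Hp" in
  destruct (Dl_inv P Q _ _ Dx) as [p [Hp ->]]; simpl in Hp; repeat destruct Hp as [<-|Hp]; try contradiction.

Notation o_ := (ptq (true, LO)).
Notation x1_ := (ptq (true, LX 1)).
Notation x1'_ := (ptq (true, LX' 1)).
Notation q_ := (ptq (false, LO)).
Notation q1_ := (ptq (false, LX 1)).

Definition lp1 := [(true, LO); (true, LX 1); (true, LX' 1); (false, LO)].
Definition lp3 := [(true, LO); (true, LX 1); (true, LX' 1); (false, LO); (false, LX 1)].

Lemma ds1 : (1 <= M)%nat -> d o_ x1_ < d o_ x1'_ ->
  exists C, unique_nice_k_clustering d (Dl P Q lp1) 3 C /\ same_cluster C o_ x1_.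
Proof.
  intros HM1 Hlt.
  assert (Hv : allv M lp1) by (intros p Hp; simpl in Hp; intuition subst; vpt).
  assert (Hs1 : d x1_ o_ = d o_ x1_) by apply (dsym Hd).
  assert (Hs2 : d x1'_ o_ = d o_ x1'_) by apply (dsym Hd).
  assert (Hs3 : d x1'_ x1_ = d x1_ x1'_) by apply (dsym Hd).
  assert (Hiv : d x1_ x1'_ > d o_ x1_) by (apply (pt_iv HP HQ); vpt).
  set (B1 := fun x => x = o_ \/ x = x1_). set (B2 := fun x => x = x1'_). set (B3 := fun x => x = q_).
  assert (Hb : blocks_ok (Dl P Q lp1) B1 B2 B3).
  { unfold blocks_ok, B1, B2, B3; repeat split.
    - intros x [-> | ->]; indl.
    - intros x ->; indl.
    - intros x ->; indl.
    - eauto.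
    - eauto.
    - eauto.
    - intros x [-> | ->] E; revert E; ptneq.
    - intros x [-> | ->] E; revert E; ptneq.
    - intros x -> E; revert E; ptneq.
    - intros x Dx; dinv Dx x; tauto. }
  exists (C3 B1 B2 B3); split; [split; [apply (C3_k Hb)|split] | rewrite C3_same; left; unfold B1; tauto].
  - intros x y z Dx Dy Dz Sxy Nxz. rewrite C3_same in Sxy, Nxz. unfold sameB, B1, B2, B3 in *.
    dinv Dz z.
    all: destruct Sxy as [[[-> | ->] [-> | ->]]|[[-> ->]|[-> ->]]].
    all: try (exfalso; apply Nxz; intuition; fail).
    all: niceg; lra.
  - intros C' Hk' Hn'. apply (C3_unique Hb Hk'). pose proof (proj1 Hk') as Hcl.
    assert (La : ~ same_cluster C' x1_ x1'_).
    { intro S. destruct (classic (same_cluster C' o_ x1_)) as [S1|N1].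
      - apply (@twoclass _ _ _ o_ q_ Hk'). intros z Dz. dinv Dz z.
        + left; apply (sc_refl Hcl); indl.
        + left; apply sc_sym; auto.
        + left; apply (sc_trans (y := x1_) Hcl); apply sc_sym; auto.
        + right; apply (sc_refl Hcl); indl.
      - assert (N1' : ~ same_cluster C' x1_ o_) by (intro; apply N1; apply sc_sym; auto).
        pose proof (Hn' x1_ x1'_ o_ ltac:(indl) ltac:(indl) ltac:(indl) S N1'). lra. }
    assert (Lb : ~ same_cluster C' o_ x1'_).
    { intro S. destruct (classic (same_cluster C' o_ x1_)) as [S1|N1].
      - apply (@twoclass _ _ _ o_ q_ Hk'). intros z Dz. dinv Dz z.
        + left; apply (sc_refl Hcl); indl.
        + left; apply sc_sym; auto.
        + left; apply sc_sym; auto.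
        + right; apply (sc_refl Hcl); indl.
      - pose proof (Hn' o_ x1'_ x1_ ltac:(indl) ltac:(indl) ltac:(indl) S N1). lra. }
    intros x y Dx Dy Sxy. dinv Dx x. all: dinv Dy y.
    all: unfold sameB, B1, B2, B3; try (intuition; fail).
    all: exfalso.
    all: try (apply La; assumption); try (apply La; apply sc_sym; assumption).
    all: try (apply Lb; assumption); try (apply Lb; apply sc_sym; assumption).
    all: eapply (sep Hd HP HQ Hfar Hv Hk' Hn' _ _ _ _ _ Sxy).
    Unshelve. all: unfold lp1, lp3; simpl; try tauto; discriminate.
Qed.
Lemma ds2 : (1 <= M)%nat -> d o_ x1'_ < d o_ x1_ ->
  exists C, unique_nice_k_clustering d (Dl P Q lp1) 3 C /\ same_cluster C o_ x1'_.
Proof.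
  intros HM1 Hlt.
  assert (Hv : allv M lp1) by (intros p Hp; simpl in Hp; intuition subst; vpt).
  assert (Hs1 : d x1_ o_ = d o_ x1_) by apply (dsym Hd).
  assert (Hs2 : d x1'_ o_ = d o_ x1'_) by apply (dsym Hd).
  assert (Hs3 : d x1'_ x1_ = d x1_ x1'_) by apply (dsym Hd).
  assert (Hiv : d x1_ x1'_ > d o_ x1_) by (apply (pt_iv HP HQ); vpt).
  set (B1 := fun x => x = o_ \/ x = x1'_). set (B2 := fun x => x = x1_). set (B3 := fun x => x = q_).
  assert (Hb : blocks_ok (Dl P Q lp1) B1 B2 B3).
  { unfold blocks_ok, B1, B2, B3; repeat split.
    - intros x [-> | ->]; indl.
    - intros x ->; indl.
    - intros x ->; indl.
    - eauto.
    - eauto.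
    - eauto.
    - intros x [-> | ->] E; revert E; ptneq.
    - intros x [-> | ->] E; revert E; ptneq.
    - intros x -> E; revert E; ptneq.
    - intros x Dx; dinv Dx x; tauto. }
  exists (C3 B1 B2 B3); split; [split; [apply (C3_k Hb)|split] | rewrite C3_same; left; unfold B1; tauto].
  - intros x y z Dx Dy Dz Sxy Nxz. rewrite C3_same in Sxy, Nxz. unfold sameB, B1, B2, B3 in *.
    dinv Dz z.
    all: destruct Sxy as [[[-> | ->] [-> | ->]]|[[-> ->]|[-> ->]]].
    all: try (exfalso; apply Nxz; intuition; fail).
    all: niceg; lra.
  - intros C' Hk' Hn'. apply (C3_unique Hb Hk'). pose proof (proj1 Hk') as Hcl.
    assert (La : ~ same_cluster C' x1_ x1'_).
    { intro S. destruct (classic (same_cluster C' o_ x1'_)) as [S1|N1].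
      - apply (@twoclass _ _ _ o_ q_ Hk'). intros z Dz. dinv Dz z.
        + left; apply (sc_refl Hcl); indl.
        + left; apply (sc_trans (y := x1'_) Hcl); [exact S|apply sc_sym; auto].
        + left; apply sc_sym; auto.
        + right; apply (sc_refl Hcl); indl.
      - assert (N1' : ~ same_cluster C' x1_ o_).
        { intro H. apply N1. apply (sc_trans (y := x1_) Hcl); [apply sc_sym; auto| exact S]. }
        pose proof (Hn' x1_ x1'_ o_ ltac:(indl) ltac:(indl) ltac:(indl) S N1'). lra. }
    assert (Lb : ~ same_cluster C' o_ x1_).
    { intro S. destruct (classic (same_cluster C' o_ x1'_)) as [S1|N1].
      - apply (@twoclass _ _ _ o_ q_ Hk'). intros z Dz. dinv Dz z.
        + left; apply (sc_refl Hcl); indl.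
        + left; apply sc_sym; auto.
        + left; apply sc_sym; auto.
        + right; apply (sc_refl Hcl); indl.
      - pose proof (Hn' o_ x1_ x1'_ ltac:(indl) ltac:(indl) ltac:(indl) S N1). lra. }
    intros x y Dx Dy Sxy. dinv Dx x. all: dinv Dy y.
    all: unfold sameB, B1, B2, B3; try (intuition; fail).
    all: exfalso.
    all: try (apply La; assumption); try (apply La; apply sc_sym; assumption).
    all: try (apply Lb; assumption); try (apply Lb; apply sc_sym; assumption).
    all: eapply (sep Hd HP HQ Hfar Hv Hk' Hn' _ _ _ _ _ Sxy).
    Unshelve. all: unfold lp1, lp3; simpl; try tauto; discriminate.
Qed.

Lemma ds3 : (1 <= M)%nat -> d o_ x1'_ = d o_ x1_ ->
  exists C, unique_nice_k_clustering d (Dl P Q lp3) 3 C /\ same_cluster C o_ x1_.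
Proof.
  intros HM1 Heq.
  assert (Hv : allv M lp3) by (intros p Hp; simpl in Hp; intuition subst; vpt).
  assert (Hs1 : d x1_ o_ = d o_ x1_) by apply (dsym Hd).
  assert (Hs2 : d x1'_ o_ = d o_ x1'_) by apply (dsym Hd).
  assert (Hs3 : d x1'_ x1_ = d x1_ x1'_) by apply (dsym Hd).
  assert (Hiv : d x1_ x1'_ > d o_ x1_) by (apply (pt_iv HP HQ); vpt).
  set (B1 := fun x => x = o_ \/ x = x1_ \/ x = x1'_). set (B2 := fun x => x = q_). set (B3 := fun x => x = q1_).
  assert (Hb : blocks_ok (Dl P Q lp3) B1 B2 B3).
  { unfold blocks_ok, B1, B2, B3; repeat split.
    - intros x [-> | [-> | ->]]; indl.
    - intros x ->; indl.
    - intros x ->; indl.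
    - eauto.
    - eauto.
    - eauto.
    - intros x [-> | [-> | ->]] E; revert E; ptneq.
    - intros x [-> | [-> | ->]] E; revert E; ptneq.
    - intros x -> E; revert E; ptneq.
    - intros x Dx; dinv Dx x; tauto. }
  exists (C3 B1 B2 B3); split; [split; [apply (C3_k Hb)|split] | rewrite C3_same; left; unfold B1; tauto].
  - intros x y z Dx Dy Dz Sxy Nxz. rewrite C3_same in Sxy, Nxz. unfold sameB, B1, B2, B3 in *.
    dinv Dz z.
    all: destruct Sxy as [[[-> | [-> | ->]] [-> | [-> | ->]]]|[[-> ->]|[-> ->]]].
    all: try (exfalso; apply Nxz; intuition; fail).
    all: niceg; lra.
  - intros C' Hk' Hn'. apply (C3_unique Hb Hk'). pose proof (proj1 Hk') as Hcl.
    assert (Sp : forall p q, In p lp3 -> In q lp3 -> fst p <> fst q -> ~ same_cluster C' (ptq p) (ptq q))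
      by (intros; apply (sep Hd HP HQ Hfar Hv Hk' Hn'); auto).
    assert (Lq : ~ same_cluster C' q_ q1_).
    { intro Sq.
      assert (All : same_cluster C' o_ x1_ -> same_cluster C' o_ x1'_ -> False).
      { intros S1 S2. apply (@twoclass _ _ _ o_ q_ Hk'). intros z Dz. dinv Dz z.
        + left; apply (sc_refl Hcl); indl.
        + left; apply sc_sym; auto.
        + left; apply sc_sym; auto.
        + right; apply (sc_refl Hcl); indl.
        + right; apply sc_sym; auto. }
      destruct (four Hk' (a := o_) (b := x1_) (c := x1'_) (e := q_) ltac:(indl) ltac:(indl) ltac:(indl) ltac:(indl))
        as [F|[F|[F|[F|[F|F]]]]].
      - destruct (classic (same_cluster C' o_ x1'_)) as [S2|N2]; [apply All; auto|].
        pose proof (Hn' o_ x1_ x1'_ ltac:(indl) ltac:(indl) ltac:(indl) F N2). lra.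
      - destruct (classic (same_cluster C' o_ x1_)) as [S2|N2]; [apply All; auto|].
        pose proof (Hn' o_ x1'_ x1_ ltac:(indl) ltac:(indl) ltac:(indl) F N2). lra.
      - apply (Sp (true, LO) (false, LO)); simpl; auto; discriminate.
      - destruct (classic (same_cluster C' o_ x1_)) as [S2|N2].
        + apply All; auto. apply (sc_trans (y := x1_) Hcl); auto.
        + assert (N1' : ~ same_cluster C' x1_ o_) by (intro; apply N2; apply sc_sym; auto).
          pose proof (Hn' x1_ x1'_ o_ ltac:(indl) ltac:(indl) ltac:(indl) F N1'). lra.
      - apply (Sp (true, LX 1) (false, LO)); simpl; auto; discriminate.
      - apply (Sp (true, LX' 1) (false, LO)); simpl; auto; discriminate. }
    intros x y Dx Dy Sxy. dinv Dx x. all: dinv Dy y.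
    all: unfold sameB, B1, B2, B3; try (intuition; fail).
    all: exfalso.
    all: try (apply Lq; assumption); try (apply Lq; apply sc_sym; assumption).
    all: eapply (Sp _ _ _ _ _ Sxy).
    Unshelve. all: unfold lp1, lp3; simpl; try tauto; discriminate.
Qed.

Ltac srefl := match goal with H : is_clustering _ _ |- _ => apply (sc_refl H); indl end.
Ltac zsolve := let z := fresh "z" in let Dz := fresh "Dz" in intros z Dz; dinv Dz z;
  first [ left; srefl | left; assumption | left; apply sc_sym; assumption
        | right; srefl | right; assumption | right; apply sc_sym; assumption ].

Lemma three_pts p1 p2 p3 : vp M p1 -> vp M p2 -> vp M p3 ->
  p1 <> p2 -> p1 <> p3 -> p2 <> p3 ->
  exists C, unique_nice_k_clustering d (Dl P Q [p1; p2; p3]) 3 C /\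
    ~ same_cluster C (ptq p1) (ptq p2).
Proof.
  intros V1 V2 V3 N12 N13 N23.
  assert (Hv : allv M [p1; p2; p3]) by (intros p Hp; simpl in Hp; intuition subst; auto).
  assert (I12 : ptq p1 <> ptq p2) by (intro E; apply (pt_inj Hd HP HQ Hfar) in E; auto).
  assert (I13 : ptq p1 <> ptq p3) by (intro E; apply (pt_inj Hd HP HQ Hfar) in E; auto).
  assert (I23 : ptq p2 <> ptq p3) by (intro E; apply (pt_inj Hd HP HQ Hfar) in E; auto).
  set (B1 := fun x => x = ptq p1). set (B2 := fun x => x = ptq p2). set (B3 := fun x => x = ptq p3).
  assert (Hb : blocks_ok (Dl P Q [p1; p2; p3]) B1 B2 B3).
  { unfold blocks_ok, B1, B2, B3; repeat split.
    - intros x ->; indl.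
    - intros x ->; indl.
    - intros x ->; indl.
    - eauto.
    - eauto.
    - eauto.
    - intros x -> E; auto.
    - intros x -> E; auto.
    - intros x -> E; auto.
    - intros x Dx; dinv Dx x; tauto. }
  exists (C3 B1 B2 B3); split; [split; [apply (C3_k Hb)|split] |].
  - intros x y z Dx Dy Dz Sxy Nxz. rewrite C3_same in Sxy, Nxz. unfold sameB, B1, B2, B3 in *.
    destruct Sxy as [[-> ->]|[[-> ->]|[-> ->]]]; rewrite (d0 Hd); apply (dpos Hd);
    intro E; subst z; apply Nxz; auto.
  - intros C' Hk' Hn'. apply (C3_unique Hb Hk'). pose proof (proj1 Hk') as Hcl.
    intros x y Dx Dy Sxy. dinv Dx x. all: dinv Dy y.
    all: unfold sameB, B1, B2, B3; try (intuition; fail).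
    all: exfalso.
    all: match goal with Sxy : same_cluster _ ?a _ |- _ =>
      first [ solve [apply (@twoclass _ _ _ a (ptq p1) Hk'); zsolve]
            | solve [apply (@twoclass _ _ _ a (ptq p2) Hk'); zsolve]
            | solve [apply (@twoclass _ _ _ a (ptq p3) Hk'); zsolve] ] end.
  - rewrite C3_same. unfold sameB, B1, B2, B3. intuition.
Qed.

Lemma b0_case : b = 0%nat -> (1 <= M)%nat -> False.
Proof.
  intros Hb HM1.
  assert (Vq : forall v w : Vector.t bool b, v = w).
  { intros v w. apply VectorSpec.to_list_inj.
    pose proof (VectorSpec.length_to_list _ _ v). pose proof (VectorSpec.length_to_list _ _ w).
    rewrite Hb in *. destruct (VectorDef.to_list v), (VectorDef.to_list w); simpl in *; auto; discriminate. }
  set (Pi := omega (run tau s0 [])).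
  assert (G : forall lp C, allv M lp -> NoDup lp -> unique_nice_k_clustering d (Dl P Q lp) 3 C ->
            fam_eq (restrict Pi (Dl P Q lp)) C).
  { intros lp C Hv Hn U. pose proof (Halg (nodup_map_pt Hd HP HQ Hfar Hv Hn) U) as H.
    unfold Pi. rewrite (Vq (run tau s0 []) (run tau s0 (map ptq lp))). exact H. }
  assert (Vo : vp M (true, LO)) by vpt.
  assert (V1 : vp M (true, LX 1)) by vpt.
  assert (V1' : vp M (true, LX' 1)) by vpt.
  assert (Vq0 : vp M (false, LO)) by vpt.
  assert (ND1 : NoDup lp1) by (unfold lp1; repeat constructor; simpl; intuition discriminate).
  assert (ND3 : NoDup lp3) by (unfold lp3; repeat constructor; simpl; intuition discriminate).
  assert (Hv1 : allv M lp1) by (intros p Hp; simpl in Hp; intuition subst; vpt).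
  assert (Hv3 : allv M lp3) by (intros p Hp; simpl in Hp; intuition subst; vpt).
  destruct (three_pts Vo V1 Vq0 ltac:(discriminate) ltac:(discriminate) ltac:(discriminate)) as [Ca [Ua Na]].
  destruct (three_pts Vo V1' Vq0 ltac:(discriminate) ltac:(discriminate) ltac:(discriminate)) as [Cb [Ub Nb]].
  assert (Fa := G [(true, LO); (true, LX 1); (false, LO)] _
                 ltac:(intros p Hp; simpl in Hp; intuition subst; vpt)
                 ltac:(repeat constructor; simpl; intuition discriminate) Ua).
  assert (Fb := G [(true, LO); (true, LX' 1); (false, LO)] _
                 ltac:(intros p Hp; simpl in Hp; intuition subst; vpt)
                 ltac:(repeat constructor; simpl; intuition discriminate) Ub).
  destruct (Rtotal_order (d o_ x1_) (d o_ x1'_)) as [Hlt|[Heq|Hgt]].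
  - destruct (ds1 HM1 Hlt) as [C [U S]].
    destruct (rs1 (G _ _ Hv1 ND1 U) S) as [B [HB [B1 B2]]].
    apply Na. apply (rs2 Fa); [indl|indl|eauto].
  - destruct (ds3 HM1 (eq_sym Heq)) as [C [U S]].
    destruct (rs1 (G _ _ Hv3 ND3 U) S) as [B [HB [B1 B2]]].
    apply Na. apply (rs2 Fa); [indl|indl|eauto].
  - destruct (ds2 HM1 Hgt) as [C [U S]].
    destruct (rs1 (G _ _ Hv1 ND1 U) S) as [B [HB [B1 B2]]].
    apply Nb. apply (rs2 Fb); [indl|indl|eauto].
Qed.

End Main.

Unset Implicit Arguments.

Theorem mainTheorem2 :
  forall (X : Type) (d : X -> X -> R), is_metric d ->
  forall (M : nat), (0 < M)%nat ->
  forall (P Q : config X), is_M_config d M P -> is_M_config d M Q ->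
  (forall u v, in_config M P u -> in_config M Q v -> 4 <= d u v) ->
  forall (b : nat), (2 * b <= M)%nat ->
  ~ exists (s0 : Vector.t bool b) (tau : Vector.t bool b -> X -> Vector.t bool b)
           (omega : Vector.t bool b -> (X -> Prop) -> Prop),
      (forall s, is_clustering (fun _ : X => True) (omega s)) /\
      (forall (l : list X), List.NoDup l ->
        forall C, unique_nice_k_clustering d (fun x => List.In x l) 3 C ->
        fam_eq (restrict (omega (run tau s0 l)) (fun x => List.In x l)) C).
Proof.
  intros X d Hd M HM P Q HP HQ Hfar b Hb [s0 [tau [omega [_ Halg]]]].
  destruct b as [|[|b']].
  - exact (b0_case Hd HP HQ Hfar s0 tau omega Halg eq_refl ltac:(lia)).
  - exact (b1_case Hd HP HQ Hfar s0 tau omega Halg eq_refl ltac:(lia)).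
  - exact (general_case Hd HP HQ Hfar s0 tau omega Halg ltac:(lia)).
Qed.
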